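(* Suppose every $f_i$ is monotone and submodular. Consider a round of the while-loop of the Randomized meta-Greedy algorithm at which the current sets satisfy $|S^t_{\rm tr}|<l$ and $|S^t_i|<k-l$, and let $S^{t+1}_{\rm tr},S^{t+1}_i$ be the sets after the round. Then $$\mathbb{E}\Bigl[\sum_{i=1}^m f_i(S^{t+1}_{\rm tr}\cup S^{t+1}_i)-f_i(S^{t}_{\rm tr}\cup S^{t}_i)\,\Big|\,S^t_{\rm tr},S^t_1,\dots,S^t_m\Bigr]\;\ge\;\frac1k\Bigl(\mathrm{OPT}-\sum_{i=1}^m f_i(S^t_{\rm tr}\cup S^t_i)\Bigr).$$
   Context: $V$ is a finite ground set; $1\le l<k\le |V|$. For $i=1,\dots,m$, $f_i:2^V\to\mathbb{R}_{\ge 0}$; monotone means $A\subseteq B\Rightarrow f_i(A)\le f_i(B)$, submodular means $f_i(A)+f_i(B)\ge f_i(A\cup B)+f_i(A\cap B)$. $\mathrm{OPT}=\max_{|S_{\rm tr}|\le l}\sum_{i=1}^m\max_{|S_i|\le k-l}f_i(S_{\rm tr}\cup S_i)$ (all sets subsets of $V$). One round of the while-loop of Randomized meta-Greedy: compute $e_i^*\in\arg\max_{e\in V}[f_i(S_{\rm tr}\cup S_i\cup\{e\})-f_i(S_{\rm tr}\cup S_i)]$ for each $i$ and $e_{\rm tr}^*\in\arg\max_{e\in V}\sum_{i=1}^m[f_i(S_{\rm tr}\cup S_i\cup\{e\})-f_i(S_{\rm tr}\cup S_i)]$; then with probability $l/k$ add $e^*_{\rm tr}$ to $S_{\rm tr}$,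 and otherwise (probability $(k-l)/k$) add $e_i^*$ to $S_i$ for every $i$. *)

(* Defs.v *)
From HB Require Import structures.
From mathcomp Require Import all_boot all_order all_algebra.
Set Implicit Arguments. Unset Strict Implicit. Unset Printing Implicit Defensive.
Import Order.TTheory GRing.Theory Num.Theory.
Local Open Scope ring_scope.

Section Defs.
Variables (R : realFieldType) (V : finType).

Definition set_monotone (f : {set V} -> R) : Prop :=
  forall A B : {set V}, A \subset B -> f A <= f B.

Definition set_submodular (f : {set V} -> R) : Prop :=
  forall A B : {set V}, f (A :|: B) + f (A :&: B) <= f A + f B.

Definition mgain (f : {set V} -> R) (S : {set V}) (e : V) : R :=
  f (S :|: [set e]) - f S.

(* Maxima over nonempty finite families (set0 is always admissible); encoded
   with Num.max and neutral element 0, which is harmless since f_i >= 0. *)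
Definition OPT (m : nat) (f : 'I_m -> {set V} -> R) (k l : nat) : R :=
  \big[Num.max/0]_(Str : {set V} | (#|Str| <= l)%N)
     \sum_(i < m) \big[Num.max/0]_(Si : {set V} | (#|Si| <= k - l)%N)
                    f i (Str :|: Si).

Definition objval (m : nat) (f : 'I_m -> {set V} -> R)
  (Str : {set V}) (S : 'I_m -> {set V}) : R :=
  \sum_(i < m) f i (Str :|: S i).

(* Expected increase of the objective in one round of Randomized meta-Greedy,
   conditional on the current sets (Str, S): with probability l/k the
   training set becomes Str ∪ {etr} (the S_i unchanged); with probability
   (k-l)/k each S_i becomes S_i ∪ {e_i} (Str unchanged). *)
Definition round_expected_gain (m : nat) (f : 'I_m -> {set V} -> R) (k l : nat)
  (Str : {set V}) (S : 'I_m -> {set V}) (etr : V) (e : 'I_m -> V) : R :=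
  (l%:R / k%:R) *
     (objval f (Str :|: [set etr]) S - objval f Str S)
  + ((k - l)%N%:R / k%:R) *
     (objval f Str (fun i => S i :|: [set e i]) - objval f Str S).

End Defs.

(* Main.v *)
Require Import Defs.
From HB Require Import structures.
From mathcomp Require Import all_boot all_order all_algebra.
From mathcomp Require Import ring lra.
Import Order.TTheory GRing.Theory Num.Theory.
Local Open Scope ring_scope.

Section Aux.
Variables (R : realFieldType) (V : finType).

Lemma mgain_ge0 (f : {set V} -> R) T x : set_monotone f -> 0 <= mgain f T x.
Proof. by move=> mo; rewrite /mgain subr_ge0; apply: mo; apply: subsetUl. Qed.

Lemma mgain_dec (f : {set V} -> R) T X x : set_monotone f -> set_submodular f ->
  mgain f (T :|: X) x <= mgain f T x.
Proof.
move=> mo sb; rewrite /mgain.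
have h := sb (T :|: X) (T :|: [set x]).
have e1 : (T :|: X) :|: (T :|: [set x]) = (T :|: X) :|: [set x].
  by rewrite setUACA setUid setUA.
rewrite e1 in h.
have h2 : f T <= f ((T :|: X) :&: (T :|: [set x])).
  by apply: mo; rewrite subsetI !subsetUl.
lra.
Qed.

Lemma key (f : {set V} -> R) T (s : seq V) : set_monotone f -> set_submodular f ->
  f (T :|: [set:: s]) <= f T + \sum_(x <- s) mgain f T x.
Proof.
move=> mo sb; elim: s => [|a s IH].
  have -> : [set:: [::]] = set0 :> {set V} by apply/setP => x; rewrite !inE.
  by rewrite big_nil addr0 setU0.
rewrite big_cons set_cons.
have -> : T :|: (a |: [set:: s]) = (T :|: [set:: s]) :|: [set a].
  by rewrite setUCA setUC.
have := @mgain_dec f T [set:: s] a mo sb; rewrite /mgain => h.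
lra.
Qed.

Lemma sum_le_size (F : V -> R) (c : R) (s : seq V) : (forall x, F x <= c) ->
  \sum_(x <- s) F x <= (size s)%:R * c.
Proof.
move=> h; elim: s => [|a s IH]; first by rewrite big_nil mul0r.
rewrite big_cons /= -addn1 natrD mulrDl mul1r addrC lerD //.
Qed.

Lemma bigmax_le_gen (I : finType) (P : pred I) (F : I -> R) c :
  0 <= c -> (forall i, P i -> F i <= c) -> \big[Num.max/0]_(i | P i) F i <= c.
Proof.
move=> c0 h; apply: (big_ind (fun x => x <= c)) => //.
by move=> x y hx hy; rewrite ge_max hx hy.
Qed.

End Aux.

Theorem mainTheorem9 (R : realFieldType) (V : finType) (m k l : nat)
  (f : 'I_m -> {set V} -> R)
  (hl : (1 <= l)%N) (hlk : (l < k)%N) (hkV : (k <= #|V|)%N)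
  (f_nonneg : forall i A, 0 <= f i A)
  (f_mono : forall i, set_monotone (f i))
  (f_sub : forall i, set_submodular (f i))
  (Str : {set V}) (S : 'I_m -> {set V})
  (hStr : (#|Str| < l)%N) (hS : forall i, (#|S i| < k - l)%N)
  (e : 'I_m -> V) (etr : V)
  (he : forall i (x : V), mgain (f i) (Str :|: S i) x <= mgain (f i) (Str :|: S i) (e i))
  (hetr : forall x : V, \sum_(i < m) mgain (f i) (Str :|: S i) x
                        <= \sum_(i < m) mgain (f i) (Str :|: S i) etr) :
  round_expected_gain f k l Str S etr e
    >= (k%:R)^-1 * (OPT f k l - objval f Str S).
Proof.
set g := fun i x => mgain (f i) (Str :|: S i) x.
have g0 : forall i x, 0 <= g i x by move=> i x; apply: mgain_ge0.
set A := \sum_(i < m) g i etr.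
set B := \sum_(i < m) g i (e i).
set ob := objval f Str S.
have A0 : 0 <= A by apply: sumr_ge0 => i _.
have B0 : 0 <= B by apply: sumr_ge0 => i _.
have eA : objval f (Str :|: [set etr]) S - ob = A.
  rewrite /ob /objval -sumrB; apply: eq_bigr => i _.
  by rewrite /g /mgain setUAC.
have eB : objval f Str (fun i => S i :|: [set e i]) - ob = B.
  rewrite /ob /objval -sumrB; apply: eq_bigr => i _.
  by rewrite /g /mgain setUA.
have hOPT : OPT f k l <= ob + l%:R * A + (k - l)%N%:R * B.
  apply: bigmax_le_gen.
    by rewrite -addrA addr_ge0 ?sumr_ge0 // addr_ge0 // mulr_ge0.
  move=> Ts hTs.
  apply: (@le_trans _ _ (\sum_(i < m) (f i (Str :|: S i)
      + \sum_(x <- enum Ts) g i x + (k - l)%N%:R * g i (e i)))).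
    apply: ler_sum => i _; apply: bigmax_le_gen.
      by rewrite addr_ge0 ?mulr_ge0 // addr_ge0 // sumr_ge0.
    move=> Si hSi.
    have s1 : f i (Ts :|: Si) <= f i ((Str :|: S i) :|: [set:: enum Ts ++ enum Si]).
      apply: f_mono; apply/subsetP => x; rewrite inE => hx.
      apply/setUP; right; rewrite inE mem_cat !mem_enum; exact: hx.
    have s2 := @key _ _ (f i) (Str :|: S i) (enum Ts ++ enum Si) (f_mono i) (f_sub i).
    rewrite big_cat /= in s2.
    have s3 : \sum_(x <- enum Si) g i x <= (k - l)%N%:R * g i (e i).
      apply: (le_trans (@sum_le_size _ _ (g i) _ (enum Si) (he i))).
      apply: ler_wpM2r; first exact: g0.
      by rewrite -cardE ler_nat.
    rewrite /g in s3 *; lra.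
  rewrite big_split big_split /= -mulr_sumr.
  apply: lerD; last by [].
  apply: lerD; first by [].
  rewrite exchange_big /=.
  apply: (le_trans (@sum_le_size _ _ (fun x => \sum_(i < m) g i x) A (enum Ts) hetr)).
  apply: ler_wpM2r => //; by rewrite -cardE ler_nat.
rewrite /round_expected_gain eA eB.
have k0 : 0 < k%:R :> R by rewrite ltr0n; apply: leq_ltn_trans hlk.
have -> : l%:R / k%:R * A + (k - l)%N%:R / k%:R * B
    = k%:R^-1 * (l%:R * A + (k - l)%N%:R * B) by rewrite /=; ring.
apply: ler_wpM2l; first by rewrite invr_ge0 ltW.
lra.
Qed.
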